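(* Assume $r:\mathbb{R}\to\mathbb{R}$ is an integrable function with $|r(a)|\le r_{\max}$ for all $a$. For every $\alpha>2r_{\max}$, the function $J(\pi_{\mu,\sigma})=\mathbb{E}_{a\sim\mathcal N(\mu,\sigma^2)}\big[r(a)-\alpha\log\mathcal N(a;\mu,\sigma^2)\big]$ of $(\mu,\sigma)\in\mathbb{R}\times(0,\infty)$ has no stationary point.
   Context: $\mathcal N(a;\mu,\sigma^2)$ denotes the Gaussian density with mean $\mu$ and standard deviation $\sigma>0$. This is the single-state (bandit) entropy-regularized objective with action space $\mathbb{R}$ and Gaussian policy $\pi_{\mu,\sigma}=\mathcal N(\mu,\sigma^2)$. *)

(* Defs.v *)
From HB Require Import structures.
From mathcomp Require Import all_boot all_order all_algebra.
From mathcomp Require Import all_classical all_reals all_analysis.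
From mathcomp Require Import normal_distribution.
Set Implicit Arguments. Unset Strict Implicit. Unset Printing Implicit Defensive.
Import Order.TTheory GRing.Theory Num.Theory.
Import numFieldNormedType.Exports.
Local Open Scope classical_set_scope.
Local Open Scope ring_scope.

Definition Jobj {R : realType} (r : R -> R) (alpha mu sigma : R) : R :=
  Rintegral (@lebesgue_measure R) setT
    (fun a => normal_pdf mu sigma a * (r a - alpha * ln (normal_pdf mu sigma a))).

Definition stationary_point {R : realType} (J : R -> R -> R) (mu sigma : R) : Prop :=
  0 < sigma /\
  derivable (fun m => J m sigma) mu 1 /\ derive1 (fun m => J m sigma) mu = 0 /\
  derivable (fun s => J mu s) sigma 1 /\ derive1 (fun s => J mu s) sigma = 0.

(* Main.v *)
Require Import Defs.
From HB Require Import structures.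
From mathcomp Require Import all_boot all_order all_algebra.
From mathcomp Require Import all_classical all_reals all_analysis.
From mathcomp Require Import normal_distribution.
From mathcomp Require Import ring lra measurable_realfun.
Import Order.TTheory GRing.Theory Num.Theory.
Import numFieldNormedType.Exports.
Local Open Scope classical_set_scope.
Local Open Scope ring_scope.

Section S.
Context {R : realType}.
Notation mu := (@lebesgue_measure R).
Implicit Types m s x : R.

Definition c0 : R := Num.sqrt (pi *+ 2).
Lemma c0_gt0 : 0 < c0.
Proof. by rewrite sqrtr_gt0 pmulrn_lgt0 ?pi_gt0. Qed.

Lemma pdfE m s x : s != 0 -> normal_pdf m s x =
  normal_peak s * expR (- (x - m) ^+ 2 / (s ^+ 2 *+ 2)).
Proof. by move=> s0; rewrite normal_pdfE. Qed.

Lemma peakE s : 0 < s -> normal_peak s = (s * c0)^-1.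
Proof.
move=> s0; rewrite /normal_peak /c0 -mulrnAr sqrtrM ?sqr_ge0 //.
by rewrite sqrtr_sqr ger0_norm ?ltW.
Qed.

Lemma F'E (s m : R) : (fun z : R => (z + m) * s)^`()%classic = cst s.
Proof.
apply/funext => x; rewrite derive1E.
have H : is_derive x (1:R) ((fun z : R => z + m) * cst s) ((x + m) *: 0 + s *: (1 + 0)).
  apply: is_deriveM.
apply: derive_val; apply: is_derive_eq H _.
by rewrite scaler0 add0r addr0 scaler1.
Qed.


Definition q m s x := normal_pdf m s x * ((x - m) ^+ 2 / (s ^+ 2 *+ 2)).

Lemma q_ge0 m s x : 0 <= q m s x.
Proof.
by rewrite /q mulr_ge0 ?normal_pdf_ge0 // divr_ge0 ?sqr_ge0 // mulrn_wge0 ?sqr_ge0.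
Qed.

Lemma q_cont m s : s != 0 -> continuous (q m s).
Proof.
move=> s0 x; apply: continuousM; first exact: continuous_normal_pdf.
apply: cvgM; last exact: cvg_cst.
apply: (cvg_comp (fun x => x - m) (fun x => x ^+ 2)).
  by apply: (@cvgB _ R^o) => //; [exact: cvg_id|exact: cvg_cst].
exact: sqr_continuous.
Qed.

Lemma q_sub m s : 0 < s -> (\int[mu]_x (q m s x)%:E = \int[mu]_x (q 0 1 x)%:E)%E.
Proof.
move=> s0.
rewrite (@increasing_ge0_integration_by_substitutionT _ (fun z => (z + m / s) * s)).
- rewrite F'E; apply: eq_integral => z _; congr EFin.
  change (q m s ((z + m / s) * s) * s = q 0 1 z).
  rewrite /q !pdfE ?oner_eq0 ?gt_eqF // !peakE ?ltr01 //.
  have -> : (z + m / s) * s - m = z * s by field; rewrite gt_eqF.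
  rewrite subr0 expr1n.
  have -> : - (z * s) ^+ 2 / (s ^+ 2 *+ 2) = - z ^+ 2 / (1 *+ 2).
    by field; rewrite gt_eqF.
  by field; rewrite ?gt_eqF ?c0_gt0.
- by move=> x y xy; rewrite ltr_pM2r // ltrD2r.
- by rewrite F'E; exact: cst_continuous.
- by rewrite F'E; exact: is_cvg_cst.
- by rewrite F'E; exact: is_cvg_cst.
- move=> x; have H : is_derive x (1:R) ((fun z : R => z + m / s) * cst s) ((x + m / s) *: 0 + s *: (1 + 0)).
    by apply: is_deriveM.
  by case: H.
- by apply: gt0_cvgMlNy => //; exact: cvg_addrr_Ny.
- by apply: gt0_cvgMly => //; exact: cvg_addrr.
- by apply: q_cont; rewrite gt_eqF.
- exact: q_ge0.
Qed.


Definition s2 : R := Num.sqrt 2.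
Lemma s2_gt0 : 0 < s2. Proof. by rewrite sqrtr_gt0. Qed.
Definition kq : R := 2 * normal_peak 1 / normal_peak s2.

Lemma q01_bound z : q 0 1 z <= kq * normal_pdf 0 s2 z.
Proof.
rewrite /kq /q !pdfE ?oner_eq0 ?gt_eqF ?s2_gt0 // !peakE ?ltr01 ?s2_gt0 //.
set y := z ^+ 2 / 4.
have hy0 : 0 <= y by rewrite /y divr_ge0 ?sqr_ge0.
have hy : y * expR (- y) <= 1.
  rewrite expRN ler_pdivrMr ?expR_gt0 // mul1r.
  by apply: le_trans (expR_ge1Dx y); rewrite lerDr.
have E1 : expR (- (z - 0) ^+ 2 / (1 ^+ 2 *+ 2)) = expR (- y) * expR (- y).
  by rewrite -expRD; congr expR; rewrite /y; field.
have E2 : expR (- (z - 0) ^+ 2 / (s2 ^+ 2 *+ 2)) = expR (- y).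
  by congr expR; rewrite /s2 sqr_sqrtr // /y; field.
have E3 : (z - 0) ^+ 2 / (1 ^+ 2 *+ 2) = 2 * y by rewrite /y; field.
rewrite E1 E2 E3.
have c0n : c0 != 0 by rewrite gt_eqF ?c0_gt0.
have s2n : s2 != 0 by rewrite gt_eqF ?s2_gt0.
have eqle : forall a b : R, a = b -> a <= b by move=> a b ->.
have key : (2 * c0^-1 * expR (- y)) * (y * expR (- y)) <= 2 * c0^-1 * expR (- y).
  by rewrite ler_piMr // mulr_ge0 ?expR_ge0 // mulr_ge0 // invr_ge0 ltW ?c0_gt0.
apply: (le_trans (le_trans _ key)).
  by apply: eqle; field.
by apply: eqle; field; rewrite c0n s2n.
Qed.

Lemma kq_ge0 : 0 <= kq.
Proof. by rewrite /kq !mulr_ge0 ?invr_ge0 ?normal_peak_ge0. Qed.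

Lemma measurable_q m s : s != 0 -> measurable_fun setT (q m s).
Proof. by move=> s0; apply: continuous_measurable_fun; exact: q_cont. Qed.

Lemma q01_fin : (\int[mu]_x (q 0 1 x)%:E < +oo)%E.
Proof.
apply: (@le_lt_trans _ _ (\int[mu]_x (kq * normal_pdf 0 s2 x)%:E)%E).
  apply: ge0_le_integral => //.
  all: try (by move=> x _; rewrite lee_fin ?q_ge0 ?q01_bound // mulr_ge0 ?kq_ge0 ?normal_pdf_ge0).
  all: try (by apply/measurable_EFinP; apply: measurable_q; rewrite oner_eq0).
  all: try (by apply/measurable_EFinP; apply: measurable_funM => //; exact: measurable_normal_pdf).
under eq_integral do rewrite EFinM.
rewrite integralZl //; last exact: integrable_normal_pdf.
by rewrite integral_normal_pdf mule1 ltry.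
Qed.


Lemma q_int m s : 0 < s -> mu.-integrable setT (EFin \o q m s).
Proof.
move=> s0; apply/integrableP; split.
  by apply/measurable_EFinP; apply: measurable_q; rewrite gt_eqF.
rewrite (_ : (\int[mu]_x _)%E = (\int[mu]_x (q m s x)%:E)%E).
  by rewrite q_sub //; exact: q01_fin.
by apply: eq_integral => x _ /=; rewrite ger0_norm ?q_ge0.
Qed.

Definition Kq : R := fine (\int[mu]_x (q 0 1 x)%:E)%E.

Lemma Rint_q m s : 0 < s -> Rintegral mu setT (q m s) = Kq.
Proof. by move=> s0; rewrite /Rintegral q_sub. Qed.

Lemma Rint_N m s : Rintegral mu setT (normal_pdf m s) = 1.
Proof. by rewrite /Rintegral integral_normal_pdf. Qed.

Lemma N_int m s : mu.-integrable setT (EFin \o normal_pdf m s).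
Proof. exact: integrable_normal_pdf. Qed.

Lemma ln_pdf m s x : 0 < s ->
  ln (normal_pdf m s x) = - (ln s + ln c0) - (x - m) ^+ 2 / (s ^+ 2 *+ 2).
Proof.
move=> s0; rewrite pdfE ?gt_eqF // peakE //.
have sc : 0 < s * c0 by rewrite mulr_gt0 ?c0_gt0.
rewrite lnM ?posrE ?expR_gt0 ?invr_gt0 // expRK lnV ?posrE // lnM ?posrE ?c0_gt0 //.
by rewrite mulNr.
Qed.

Lemma Nr_int m s (r : R -> R) rmax :
  mu.-integrable setT (EFin \o r) -> (forall a, `|r a| <= rmax) ->
  mu.-integrable setT (EFin \o (fun x => normal_pdf m s x * r x)).
Proof.
move=> ir hr.
have mr : measurable_fun setT r by apply/measurable_EFinP; exact: (measurable_int mu ir).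
apply: (@le_integrable _ _ _ mu _ _ _ (EFin \o (fun x => rmax * normal_pdf m s x))).
- by [].
- apply/measurable_EFinP; apply: measurable_funM => //; exact: measurable_normal_pdf.
- move=> x _ /=; rewrite !normrM (ger0_norm (normal_pdf_ge0 _ _ _)) mulrC.
  rewrite lee_fin ler_wpM2r ?normal_pdf_ge0 //; apply: le_trans (hr x) _.
  exact: ler_norm.
- apply: (eq_integrable measurableT _ _ _ (integrableZl measurableT rmax (N_int m s))).
  by move=> x _; rewrite /= EFinM.
Qed.


Lemma J_eq (r : R -> R) rmax alpha m s :
  mu.-integrable setT (EFin \o r) -> (forall a, `|r a| <= rmax) -> 0 < s ->
  Jobj r alpha m s = Rintegral mu setT (fun x => normal_pdf m s x * r x)
     + alpha * (ln s + ln c0) + alpha * Kq.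
Proof.
move=> ir hr s0; rewrite /Jobj.
rewrite (@eq_Rintegral _ _ _ mu setT (fun a => (normal_pdf m s a * r a
   + (alpha * (ln s + ln c0)) * normal_pdf m s a) + alpha * q m s a)); last first.
  by move=> a _; rewrite ln_pdf // /q; ring.
have i1 := @Nr_int m s r rmax ir hr.
have i2 : mu.-integrable setT (EFin \o (fun a => (alpha * (ln s + ln c0)) * normal_pdf m s a)).
  apply: (eq_integrable measurableT _ _ _ (integrableZl measurableT (alpha * (ln s + ln c0)) (N_int m s))).
  by move=> x _; rewrite /= EFinM.
have i3 : mu.-integrable setT (EFin \o (fun a => alpha * q m s a)).
  apply: (eq_integrable measurableT _ _ _ (integrableZl measurableT alpha (@q_int m s s0))).
  by move=> x _; rewrite /= EFinM.
have i12 : mu.-integrable setT (EFin \o (fun a => normal_pdf m s a * r a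
   + (alpha * (ln s + ln c0)) * normal_pdf m s a)).
  apply: (eq_integrable measurableT _ _ _ (integrableD measurableT i1 i2)).
  by move=> x _.
rewrite RintegralD // RintegralD // RintegralZl // ?RintegralZl //.
- by rewrite Rint_N Rint_q // mulr1.
- exact: q_int.
- exact: N_int.
Qed.


End S.
Arguments c0 {R}. Arguments Kq {R}. Arguments s2 {R}. Arguments kq {R}.

Section S2.

Context {R : realType}.
Notation mu := (@lebesgue_measure R).
Implicit Types m s x : R.
Lemma N_mono m sg s x : 0 < sg -> sg <= s ->
  sg / s * normal_pdf m sg x <= normal_pdf m s x.
Proof.
move=> sg0 sgs; have s0 : 0 < s by apply: lt_le_trans sgs.
rewrite !pdfE ?gt_eqF // !peakE //.
have c0n : (c0 : R) != 0 by rewrite gt_eqF ?c0_gt0.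
have -> : sg / s * ((sg * c0)^-1 * expR (- (x - m) ^+ 2 / (sg ^+ 2 *+ 2))) =
   (s * c0)^-1 * expR (- (x - m) ^+ 2 / (sg ^+ 2 *+ 2)).
  by field; rewrite c0n ?gt_eqF.
apply: ler_wpM2l; first by rewrite invr_ge0; apply/ltW; rewrite mulr_gt0 ?c0_gt0.
rewrite ler_expR !mulNr lerN2.
apply: (ler_wpM2l (sqr_ge0 (x - m))).
have a1 : 0 < sg ^+ 2 *+ 2 by rewrite pmulrn_lgt0 // exprn_gt0.
have a2 : 0 < s ^+ 2 *+ 2 by rewrite pmulrn_lgt0 // exprn_gt0.
rewrite lef_pV2 ?posrE //.
have hq : sg * sg <= s * s by apply: ler_pM => //; apply/ltW.
rewrite !expr2 -!(mulr_natr (_ * _)).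
exact: (ler_wpM2r (ler0n R 2) hq).
Qed.

Lemma Nrr_int m s (r : R -> R) rmax :
  mu.-integrable setT (EFin \o r) -> (forall a, `|r a| <= rmax) ->
  mu.-integrable setT (EFin \o (fun x => normal_pdf m s x * (r x + rmax))).
Proof.
move=> ir hr.
apply: (eq_integrable measurableT _ _ _ (integrableD measurableT (@Nr_int R m s r rmax ir hr)
  (integrableZl measurableT rmax (N_int m s)))).
by move=> x _; rewrite /= -EFinM -EFinD; congr EFin; ring.
Qed.

Lemma Rint_Nrr m s (r : R -> R) rmax :
  mu.-integrable setT (EFin \o r) -> (forall a, `|r a| <= rmax) ->
  Rintegral mu setT (fun x => normal_pdf m s x * (r x + rmax)) =
  Rintegral mu setT (fun x => normal_pdf m s x * r x) + rmax.
Proof.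
move=> ir hr.
rewrite (@eq_Rintegral _ _ _ mu setT (fun x => normal_pdf m s x * r x + rmax * normal_pdf m s x)); last first.
  by move=> x _; ring.
rewrite RintegralD //; last exact: (integrableZl measurableT rmax (N_int m s)).
  by rewrite RintegralZl // ?Rint_N ?mulr1 //; exact: N_int.
exact: (@Nr_int R m s r rmax ir hr).
Qed.

Lemma E_le m s (r : R -> R) rmax :
  mu.-integrable setT (EFin \o r) -> (forall a, `|r a| <= rmax) ->
  Rintegral mu setT (fun x => normal_pdf m s x * r x) <= rmax.
Proof.
move=> ir hr.
apply: (@le_trans _ _ (Rintegral mu setT (fun x => rmax * normal_pdf m s x))).
  apply: le_Rintegral => //.
  - exact: (@Nr_int R m s r rmax ir hr).
  - exact: (integrableZl measurableT rmax (N_int m s)).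
  - move=> x _; rewrite mulrC ler_wpM2r ?normal_pdf_ge0 //.
    by apply: le_trans (hr x); exact: ler_norm.
by rewrite RintegralZl // ?Rint_N ?mulr1 //; exact: N_int.
Qed.

Lemma E_diff m sg s (r : R -> R) rmax :
  mu.-integrable setT (EFin \o r) -> (forall a, `|r a| <= rmax) ->
  0 < sg -> sg <= s ->
  (sg / s - 1) * (2 * rmax) <=
  Rintegral mu setT (fun x => normal_pdf m s x * r x) -
  Rintegral mu setT (fun x => normal_pdf m sg x * r x).
Proof.
move=> ir hr sg0 sgs; have s0 : 0 < s by apply: lt_le_trans sgs.
have h3 : sg / s * (Rintegral mu setT (fun x => normal_pdf m sg x * r x) + rmax) <=
   Rintegral mu setT (fun x => normal_pdf m s x * r x) + rmax.
  rewrite -!Rint_Nrr // -RintegralZl //; last exact: (@Nrr_int m sg r rmax ir hr).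
  apply: le_Rintegral => //.
  - exact: (integrableZl measurableT (sg / s) (@Nrr_int m sg r rmax ir hr)).
  - exact: (@Nrr_int m s r rmax ir hr).
  - move=> x _; rewrite mulrA ler_wpM2r ?N_mono //.
    have := hr x; rewrite ler_norml => /andP[h _].
    by rewrite -lerBlDr sub0r.
have h4 := @E_le m sg r rmax ir hr.
have t1 : sg / s <= 1 by rewrite ler_pdivrMr // mul1r.
have t0 : 0 < sg / s by rewrite divr_gt0.
move: h3 h4 t1 t0.
set t := sg / s.
set A := Rintegral _ _ _.
set B := Rintegral _ _ _.
move=> h3 h4 t1 t0.
have h5 : 0 <= (1 - t) * (rmax - A) by rewrite mulr_ge0 // subr_ge0.
have -> : (t - 1) * (2 * rmax) = t * (A + rmax) - rmax - A - (1 - t) * (rmax - A) by ring.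
move: h3 h5; set X := t * (A + rmax); set Y := (1 - t) * (rmax - A).
move=> h3 h5; lra.
Qed.

End S2.


Lemma deriv_lb (R : realType) (f : R -> R) x c d : 0 < d ->
  derivable f x 1 -> (forall h, 0 < h < d -> c <= (f (x+h) - f x)/h) ->
  c <= derive1 f x.
Proof.
move=> d0 df H; rewrite derive1E /derive.
set g := (fun h : R => _).
have cg : g @ 0^'+ --> lim (g @ 0^') by apply: cvg_dnbhs_at_right; exact: df.
apply: (cvgr_to_ge cg).
near=> h.
have -> : g h = (f (x+h) - f x)/h.
  rewrite /g /= [h%:A]mulr1 (addrC h x). exact: mulrC.
apply: H; apply/andP; split.
  by near: h; exact: nbhs_right_gt.
by near: h; apply: nbhs_right_lt.
Unshelve. all: end_near. Qed.


Theorem proposition3p3 (R : realType) (r : R -> R) (rmax : R) :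
  (@lebesgue_measure R).-integrable setT (EFin \o r) ->
  (forall a, `|r a| <= rmax) ->
  forall alpha : R, 2 * rmax < alpha ->
  ~ (exists mu sigma : R, stationary_point (Jobj r alpha) mu sigma).
Proof.
move=> ir hr alpha ha [m [sg [sg0 [_ [_ [dJ dJ0]]]]]].
have rm0 : 0 <= rmax by apply: le_trans (hr 0); exact: normr_ge0.
set c := (alpha - 2 * rmax) / (2 * sg).
have cpos : 0 < c by rewrite divr_gt0 ?subr_gt0 // mulr_gt0.
suff : c <= derive1 (fun s => Jobj r alpha m s) sg by rewrite dJ0 leNgt cpos.
apply: (@deriv_lb R _ sg c sg sg0 dJ) => h /andP[h0 hsg].
set s := sg + h.
have s0 : 0 < s by rewrite addr_gt0.
have sgs : sg <= s by rewrite lerDl; apply/ltW.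
rewrite (@J_eq R r rmax alpha m s ir hr s0) (@J_eq R r rmax alpha m sg ir hr sg0).
have hE := @E_diff R m sg s r rmax ir hr sg0 sgs.
have hl : 1 - sg / s <= ln s - ln sg.
  have := @le_ln1Dx R (sg / s - 1).
  rewrite addrCA subrr addr0 ln_div ?posrE // => H.
  have hp := divr_gt0 sg0 s0.
  have : ln sg - ln s <= sg / s - 1 by apply: H; lra.
  lra.
rewrite ler_pdivlMr //.
have e1 : 1 - sg / s = h / s by rewrite /s; field; rewrite gt_eqF.
rewrite e1 in hl.
have hu : h / (2 * sg) <= h / s.
  rewrite ler_pdivrMr ?mulr_gt0 // mulrAC ler_pdivlMr //; apply: ler_wpM2l; first exact/ltW.
  by rewrite /s; lra.
have ec : c * h = (alpha - 2 * rmax) * (h / (2 * sg)) by rewrite /c; field; rewrite gt_eqF.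
rewrite ec.
apply: (@le_trans _ _ ((alpha - 2 * rmax) * (h / s))).
  by apply: ler_wpM2l => //; rewrite subr_ge0; apply/ltW.
have e2 : sg / s - 1 = - (h / s) by rewrite -e1; ring.
rewrite e2 in hE.
move: hE hl; set E1 := Rintegral _ _ _; set E2 := Rintegral _ _ _; set u := h / s.
move=> hE hl.
have : alpha * u <= alpha * (ln s - ln sg).
  by apply: ler_wpM2l => //; apply: le_trans (ltW ha); rewrite mulr_ge0.
set L := alpha * (ln s - ln sg).
have -> : E1 + alpha * (ln s + ln c0) + alpha * Kq - (E2 + alpha * (ln sg + ln c0) + alpha * Kq) = (E1 - E2) + L by rewrite /L; ring.
move: hE; set P := - u * (2 * rmax).
have -> : (alpha - 2 * rmax) * u = alpha * u + P by rewrite /P; ring.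
set Q := alpha * u.
move=> hE hQ; lra.
Qed.
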